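(* Let $\Theta\subseteq\mathbb{R}^p$ be convex and bounded with diameter $R\triangleq\max_{\theta_1,\theta_2\in\Theta}\|\theta_1-\theta_2\|_2$, and let $f:\mathbb{R}^p\to\mathbb{R}$ be continuous and convex with minimum $f^\star$ over $\Theta$. Consider the following scheme: given $\theta_0\in\Theta$, for $n\ge1$, let $g_n$ be a majorant function in $\mathcal{S}_{L,L}(f,\theta_{n-1})$; compute $\nu_n\in\operatorname{arg\,min}_{\theta\in\Theta}\big[g_n(\theta)-\frac{L}{2}\|\theta-\theta_{n-1}\|_2^2\big]$; compute $\alpha^\star\in\operatorname{arg\,min}_{\alpha\in[0,1]}g_n(\alpha\nu_n+(1-\alpha)\theta_{n-1})$; set $\theta_n\triangleq\alpha^\star\nu_n+(1-\alpha^\star)\theta_{n-1}$. Then $(f(\theta_n))_{n\ge0}$ converges to $f^\star$ and $$f(\theta_n)-f^\star\le\frac{2LR^2}{n+2}\quad\text{for all }n\ge1.$$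
   Context: First-order surrogates: $g:\mathbb{R}^p\to\mathbb{R}$ belongs to $\mathcal{S}_L(f,\kappa)$ if (a) $g(\theta')\ge f(\theta')$ for all $\theta'\in\operatorname{arg\,min}_{\theta\in\Theta}g(\theta)$, and (b) $h\triangleq g-f$ is differentiable with $L$-Lipschitz gradient, $h(\kappa)=0$, $\nabla h(\kappa)=0$; $\mathcal{S}_{L,\rho}(f,\kappa)$ is the subset of $\rho$-strongly convex elements. A majorant function satisfies $g\ge f$ everywhere. The minimizers are assumed to exist. *)

(* Defs.v *)
From HB Require Import structures.
From mathcomp Require Import all_boot all_order all_algebra.
From mathcomp Require Import all_classical all_reals all_analysis.
Set Implicit Arguments. Unset Strict Implicit. Unset Printing Implicit Defensive.
Import Order.TTheory GRing.Theory Num.Theory.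
Import numFieldNormedType.Exports.
Local Open Scope classical_set_scope.
Local Open Scope ring_scope.

Section Defs.
Variables (R : realType) (p : nat).
Notation V := 'rV[R]_p.

Definition dotp (u v : V) : R := \sum_(i < p) u ord0 i * v ord0 i.
Definition norm2 (u : V) : R := Num.sqrt (dotp u u).

Definition grad (h : V -> R) (x : V) : V := \row_(i < p) ('d h x (delta_mx 0 i)).

Definition cvx_set (T : set V) : Prop :=
  forall x y t, T x -> T y -> 0 <= t <= 1 -> T (t *: x + (1 - t) *: y).

Definition cvx_fun (g : V -> R) : Prop :=
  forall x y t, 0 <= t <= 1 -> g (t *: x + (1 - t) *: y) <= t * g x + (1 - t) * g y.

Definition strongly_convex (rho : R) (g : V -> R) : Prop :=
  cvx_fun (fun x => g x - rho / 2 * norm2 x ^+ 2).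

Definition l2_bounded (T : set V) : Prop :=
  exists M : R, forall x, T x -> norm2 x <= M.

(* R is the diameter sup_{a,b in T} ||a - b||_2 *)
Definition is_diameter (T : set V) (D : R) : Prop :=
  (forall a b, T a -> T b -> norm2 (a - b) <= D) /\
  (forall r, (forall a b, T a -> T b -> norm2 (a - b) <= r) -> D <= r).

Definition is_argmin (T : set V) (g : V -> R) (x : V) : Prop :=
  T x /\ forall y, T y -> g x <= g y.

Definition is_min_value (T : set V) (f : V -> R) (m : R) : Prop :=
  exists x, is_argmin T f x /\ f x = m.

Definition majorant (f g : V -> R) : Prop := forall x, f x <= g x.

Definition first_order_surrogate (T : set V) (L : R) (f : V -> R) (kappa : V)
    (g : V -> R) : Prop :=
  (forall x, is_argmin T g x -> f x <= g x) /\
  (let h := fun x => g x - f x in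
   (forall x, differentiable h x) /\
   (forall x y, norm2 (grad h x - grad h y) <= L * norm2 (x - y)) /\
   h kappa = 0 /\ grad h kappa = 0).

Definition strong_surrogate (T : set V) (L rho : R) (f : V -> R) (kappa : V)
    (g : V -> R) : Prop :=
  first_order_surrogate T L f kappa g /\ strongly_convex rho g.

End Defs.

(* Main.v *)
Require Import Defs.
From HB Require Import structures.
From mathcomp Require Import all_boot all_order all_algebra.
From mathcomp Require Import all_classical all_reals all_analysis.
From mathcomp Require Import ring lra.
Import Order.TTheory GRing.Theory Num.Theory.
Import numFieldNormedType.Exports.
Local Open Scope classical_set_scope.
Local Open Scope ring_scope.

Section Aux.
Variables (R : realType) (p : nat).
Notation V := 'rV[R]_p.
Implicit Types u v w : V.

Lemma dotpC u v : dotp u v = dotp v u.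
Proof. by rewrite /dotp; apply: eq_bigr => i _; rewrite mulrC. Qed.

Lemma dotpDl u v w : dotp (u + v) w = dotp u w + dotp v w.
Proof. by rewrite /dotp -big_split; apply: eq_bigr => i _; rewrite mxE mulrDl. Qed.

Lemma dotpZl a u v : dotp (a *: u) v = a * dotp u v.
Proof. by rewrite /dotp mulr_sumr; apply: eq_bigr => i _; rewrite mxE mulrA. Qed.

Lemma dotpNl u v : dotp (- u) v = - dotp u v.
Proof. by rewrite -scaleN1r dotpZl mulN1r. Qed.

Lemma dotpBl u v w : dotp (u - v) w = dotp u w - dotp v w.
Proof. by rewrite dotpDl dotpNl. Qed.

Lemma dotpDr u v w : dotp w (u + v) = dotp w u + dotp w v.
Proof. by rewrite dotpC dotpDl !(dotpC w). Qed.

Lemma dotpZr a u v : dotp v (a *: u) = a * dotp v u.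
Proof. by rewrite dotpC dotpZl dotpC. Qed.

Lemma dotpBr u v w : dotp w (u - v) = dotp w u - dotp w v.
Proof. by rewrite dotpC dotpBl !(dotpC w). Qed.

Lemma dotp_ge0 u : 0 <= dotp u u.
Proof. by apply: sumr_ge0 => i _; rewrite -expr2 sqr_ge0. Qed.

Lemma norm2_ge0 u : 0 <= norm2 u.
Proof. exact: sqrtr_ge0. Qed.

Lemma norm2_sq u : norm2 u ^+ 2 = dotp u u.
Proof. by rewrite /norm2 sqr_sqrtr // dotp_ge0. Qed.

Lemma norm2Z a u : norm2 (a *: u) = `|a| * norm2 u.
Proof.
by rewrite /norm2 dotpZl dotpZr mulrA -expr2 sqrtrM ?sqr_ge0 // sqrtr_sqr.
Qed.

Lemma CS u v : dotp u v <= norm2 u * norm2 v.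
Proof.
set a := norm2 u; set b := norm2 v.
have ha : 0 <= a := norm2_ge0 u. have hb : 0 <= b := norm2_ge0 v.
have key : forall s t : R, 0 <= s^+2 * a^+2 - 2 * s * t * dotp u v + t^+2 * b^+2.
  move=> s t; have := dotp_ge0 (s *: u - t *: v).
  rewrite !dotpBl !dotpBr !dotpZl !dotpZr (dotpC v u) /a /b !norm2_sq.
  move=> H; apply: le_trans H _; rewrite le_eqVlt; apply/orP; left; apply/eqP; ring.
have [a0|apos] := eqVneq a 0.
  rewrite a0 mul0r; rewrite leNgt; apply/negP => huv.
  have := key ((b^+2 + 1) / (2 * dotp u v)) 1.
  rewrite a0 expr0n /= mulr0 sub0r expr1n mul1r mulr1.
  have -> : 2 * ((b ^+ 2 + 1) / (2 * dotp u v)) * dotp u v = b^+2 + 1.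
    by field; rewrite gt_eqF.
  lra.
have [b0|bpos] := eqVneq b 0.
  rewrite b0 mulr0; rewrite leNgt; apply/negP => huv.
  have := key 1 ((a^+2 + 1) / (2 * dotp u v)).
  rewrite b0 expr0n /= mulr0 addr0 expr1n mul1r mulr1.
  have -> : 2 * ((a ^+ 2 + 1) / (2 * dotp u v)) * dotp u v = a^+2 + 1.
    by field; rewrite gt_eqF.
  lra.
have := key b a.
have ha' : 0 < a by rewrite lt_def apos ha.
have hb' : 0 < b by rewrite lt_def bpos hb.
move=> H.
have H2 : 2 * b * a * dotp u v <= 2 * b * a * (a * b).
  apply: le_trans (_ : b ^+ 2 * a ^+ 2 + a ^+ 2 * b ^+ 2 <= _); first lra.
  rewrite le_eqVlt; apply/orP; left; apply/eqP; ring.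
rewrite ler_pM2l in H2 => //; apply: mulr_gt0 => //; apply: mulr_gt0 => //.
Qed.

Lemma dh_dotp (h : V -> R) x d : 'd h x d = dotp (grad h x) d.
Proof.
rewrite {1}(row_sum_delta d) linear_sum /dotp; apply: eq_bigr => i _.
by rewrite linearZ /= mxE mulrC.
Qed.

Lemma line_derive (h : V -> R) x d t : differentiable h (x + t *: d) ->
  is_derive t 1 (fun s : R => h (x + s *: d)) (dotp (grad h (x + t *: d)) d).
Proof.
move=> dh.
have E : (fun s : R => s^-1 *: (((fun s : R => h (x + s *: d)) \o shift t) (s *: 1)
           - h (x + t *: d))) =
         (fun s : R => s^-1 *: ((h \o shift (x + t *: d)) (s *: d) - h (x + t *: d))).
  apply/funext => s /=; congr (_ *: (h _ - _)).
  by rewrite [_%:A]mulr1 scalerDl addrCA.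
split.
  rewrite /derivable E; exact: diff_derivable.
by rewrite /derive E -/(derive h (x + t *: d) d) deriveE // dh_dotp.
Qed.

Lemma descent (h : V -> R) (L : R) k x :
  (forall y, differentiable h y) ->
  (forall y z, norm2 (grad h y - grad h z) <= L * norm2 (y - z)) ->
  h k = 0 -> grad h k = 0 ->
  h x <= L / 2 * norm2 (x - k) ^+ 2.
Proof.
move=> dh lip hk gk.
set d := x - k.
set c := L * dotp d d.
pose psi : R -> R := (fun s : R => h (k + s *: d)) - (c/2) \*: ((@id R) * (@id R)).
pose dpsi := fun s : R => dotp (grad h (k + s *: d)) d - (c/2) *: (s *: 1 + s *: 1).
have der (s : R) : is_derive s (1:R) psi (dpsi s).
  apply: is_deriveB; first exact: line_derive.
have [xi xiin E] : exists2 xi, xi \in `]0, 1[%R & psi 1 - psi 0 = dpsi xi * (1 - 0).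
  apply: (@MVT R psi dpsi 0 1) => //.
  apply: derivable_within_continuous => y _; exact: (der y).(ex_derive).
have hxi : 0 < xi by move: xiin; rewrite in_itv /= => /andP[].
have : dpsi xi <= 0.
  rewrite /dpsi.
  have -> : dotp (grad h (k + xi *: d)) d = dotp (grad h (k + xi *: d) - grad h k) d.
    by rewrite gk subr0.
  apply: (@le_trans _ _ (norm2 (grad h (k + xi *: d) - grad h k) * norm2 d - (c/2) *: (xi *: 1 + xi *: 1))).
    by rewrite lerD2r CS.
  have : norm2 (grad h (k + xi *: d) - grad h k) <= L * (xi * norm2 d).
    by rewrite (le_trans (lip _ _)) // addrAC subrr add0r norm2Z ger0_norm // ltW.
  move=> Hl.
  have Hn := norm2_ge0 d.
  have Hd : dotp d d = norm2 d ^+ 2 by rewrite norm2_sq.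
  rewrite /c Hd /GRing.scale /= !mulr1.
  have := ler_wpM2r Hn Hl. nra.
have P1 : psi 1 = h (k + 1 *: d) - c/2 * (1 * 1) by [].
have P0 : psi 0 = h (k + 0 *: d) - c/2 * (0 * 0) by [].
have Ekd : k + d = x by rewrite /d addrC subrK.
rewrite P1 P0 scale0r addr0 hk scale1r Ekd subr0 mulr1 !mul0r mulr0 subr0 mulr1 in E.
rewrite norm2_sq -/d -/c.
move=> H; rewrite subr0 mulr1 in E; rewrite /c in E; rewrite mulrAC; lra.
Qed.

Lemma l_cvx (g : V -> R) (L : R) k : strongly_convex L g ->
  cvx_fun (fun x => g x - L / 2 * norm2 (x - k) ^+ 2).
Proof.
move=> sc x y t ht; have := sc x y t ht; rewrite /= !norm2_sq.
rewrite !dotpBl !dotpBr !dotpDl !dotpDr !dotpZl !dotpZr (dotpC y x) (dotpC k x) (dotpC k y).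
move=> H; nra.
Qed.

Lemma norm2_0 : norm2 (0 : V) = 0.
Proof. by have := norm2Z 0 0; rewrite scale0r normr0 mul0r. Qed.

End Aux.

Theorem proposition4p1 (R : realType) (p : nat) (Theta : set 'rV[R]_p)
    (D : R) (f : 'rV[R]_p -> R) (fstar L : R)
    (theta nu : nat -> 'rV[R]_p) (g : nat -> 'rV[R]_p -> R) (alpha : nat -> R) :
  cvx_set Theta -> l2_bounded Theta -> is_diameter Theta D ->
  continuous f -> cvx_fun f -> is_min_value Theta f fstar ->
  0 < L ->
  Theta (theta 0%N) ->
  (forall n, (1 <= n)%N ->
     majorant f (g n) /\ strong_surrogate Theta L L f (theta n.-1) (g n)) ->
  (forall n, (1 <= n)%N ->
     is_argmin Theta (fun x => g n x - L / 2 * norm2 (x - theta n.-1) ^+ 2) (nu n)) ->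
  (forall n, (1 <= n)%N ->
     0 <= alpha n <= 1 /\
     forall a, 0 <= a <= 1 ->
       g n (alpha n *: nu n + (1 - alpha n) *: theta n.-1)
         <= g n (a *: nu n + (1 - a) *: theta n.-1)) ->
  (forall n, (1 <= n)%N -> theta n = alpha n *: nu n + (1 - alpha n) *: theta n.-1) ->
  (fun n => f (theta n)) @ \oo --> fstar /\
  (forall n, (1 <= n)%N -> f (theta n) - fstar <= 2 * L * D ^+ 2 / (n%:R + 2)).
Proof.
move=> Tcvx Tbd [Ddiam _] fcont fcvx [xs [[Txs xsmin] fxs]] L0 T0 Hg Hnu Halpha Htheta.
have D0 : 0 <= D by apply: le_trans (Ddiam xs xs Txs Txs); exact: norm2_ge0.
have step : forall n, (1 <= n)%N -> Theta (theta n.-1) ->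
   Theta (theta n) /\ forall a, 0 <= a <= 1 ->
     f (theta n) - fstar <= (1 - a) * (f (theta n.-1) - fstar) + L * a^+2 * D^+2 / 2.
  move=> n n1 Tk.
  have [maj [[_ [hdiff [hlip [hk gk]]]] sc]] := Hg n n1.
  have [Tnu numin] := Hnu n n1.
  have [ha amin] := Halpha n n1.
  split; first by rewrite Htheta //; apply: Tcvx.
  move=> a ha'.
  set k := theta n.-1 in Tk maj hdiff hlip hk gk sc numin amin Htheta *.
  pose l := fun x => g n x - L / 2 * norm2 (x - k) ^+ 2.
  have hk' : g n k = f k by move: hk => /= /eqP; rewrite subr_eq0 => /eqP.
  have lk : l k = f k by rewrite /l subrr norm2_0 expr0n /= mulr0 subr0.
  have lxs : l xs <= fstar.
    have := @descent _ _ (fun x => g n x - f x) L k xs hdiff hlip hk gk.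
    rewrite /l -fxs /=; lra.
  have lnu : l (nu n) <= fstar := le_trans (numin xs Txs) lxs.
  have conv : l (a *: nu n + (1 - a) *: k) <= a * l (nu n) + (1 - a) * l k
    := @l_cvx _ _ (g n) L k sc (nu n) k a ha'.
  have [a0 a1] : 0 <= a /\ a <= 1 by move/andP: ha'.
  have dist : norm2 (a *: nu n + (1 - a) *: k - k) ^+2 <= a^+2 * D^+2.
    have -> : a *: nu n + (1 - a) *: k - k = a *: (nu n - k).
      by rewrite scalerBl scale1r scalerBr addrCA [k + _]addrC addrK.
    rewrite norm2Z ger0_norm // exprMn; apply: ler_wpM2l; first exact: sqr_ge0.
    rewrite ler_sqr ?nnegrE ?norm2_ge0 //; exact: (Ddiam _ _ Tnu Tk).
  have f1 : f (theta n) <= g n (a *: nu n + (1 - a) *: k).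
    apply: le_trans (maj _) _; rewrite Htheta //; exact: amin.
  have E1 : g n (a *: nu n + (1 - a) *: k) = l (a *: nu n + (1 - a) *: k)
     + L / 2 * norm2 (a *: nu n + (1 - a) *: k - k) ^+ 2 by rewrite /l subrK.
  have H1 : a * l (nu n) <= a * fstar by rewrite ler_wpM2l.
  have H2 : L / 2 * norm2 (a *: nu n + (1 - a) *: k - k) ^+ 2 <= L / 2 * (a^+2 * D^+2).
    by rewrite ler_wpM2l // divr_ge0 // ltW.
  rewrite lk in conv.
  have -> : L * a ^+ 2 * D ^+ 2 / 2 = L / 2 * (a^+2 * D^+2) by ring.
  lra.
have Tall : forall n, Theta (theta n).
  by elim=> [|n IH] //; exact: (step n.+1 erefl IH).1.
have C0 : 0 <= L * D^+2 by rewrite mulr_ge0 ?sqr_ge0 // ltW.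
have bound : forall n, (1 <= n)%N -> f (theta n) - fstar <= 2 * L * D ^+ 2 / (n%:R + 2).
  case=> // n _; elim: n => [|n IH].
    have := (step 1%N erefl (Tall 0%N)).2 1; rewrite ler01 lexx => /(_ isT).
    rewrite subrr mul0r add0r expr1n mulr1.
    have -> : 2 * L * D ^+ 2 / (1%:R + 2) = (L * D^+2) * (2/3) by rewrite mulr1n; field.
    move=> H; apply: le_trans H _; lra.
  set N : R := n.+1%:R in IH.
  have N0 : 0 <= N by rewrite /N ler0n.
  have -> : (n.+2)%:R = N + 1 :> R by rewrite /N natr1.
  have [_ st] := step n.+2 erefl (Tall n.+1).
  have a01 : 0 <= 2 / (N + 1 + 2) <= 1.
    apply/andP; split; first by rewrite divr_ge0 //; lra.
    by rewrite ler_pdivrMr; lra.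
  have := st _ a01 => H.
  have H3 : (1 - 2 / (N + 1 + 2)) * (f (theta n.+2.-1) - fstar) <=
            (1 - 2 / (N + 1 + 2)) * (2 * L * D ^+ 2 / (N + 2)).
    by apply: ler_wpM2l => //; move/andP: a01 => [_]; rewrite subr_ge0.
  apply: le_trans H _; apply: le_trans (lerD H3 (lexx _)) _.
  rewrite -subr_ge0.
  have -> : 2 * L * D ^+ 2 / (N + 1 + 2) -
   ((1 - 2 / (N + 1 + 2)) * (2 * L * D ^+ 2 / (N + 2)) +
    L * (2 / (N + 1 + 2)) ^+ 2 * D ^+ 2 / 2) = 2 * (L * D^+2) / ((N+2) * (N + 3) ^+ 2).
    by field; apply/andP; split; lra.
  by rewrite divr_ge0 // ?mulr_ge0 ?sqr_ge0 //; lra.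
split => //.
apply/cvgrPdist_le => eps eps0.
near=> n.
have hn : 2 * (L * D^+2) / eps < n%:R by near: n; exact: nbhs_infty_gtr.
have n1 : (1 <= n)%N.
  have : (0:R) < n%:R.
    apply: le_lt_trans hn; apply: divr_ge0; [lra | exact: ltW].
  by rewrite ltr0n.
have e0 : fstar <= f (theta n) by rewrite -fxs; exact: xsmin.
rewrite distrC ger0_norm ?subr_ge0 //.
apply: le_trans (bound n n1) _.
rewrite ltr_pdivrMr // in hn.
have n0 : (0:R) <= n%:R by rewrite ler0n.
rewrite ler_pdivrMr; last by lra.
lra.
Unshelve. all: by end_near.
Qed.
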